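(* Let $f:X\to\mathcal G$ be a convex function, $x\in\operatorname{dom} f$ and $u\in X$. Then $$f'(x,u)=\operatorname{cl}\operatorname{co}\bigcup_{t>0}\tfrac1t\big(f(x+tu)\ominus f(x)\big),$$ $f'(x,0)=0^+f(x)$, and the function $u\mapsto f'(x,u)$ is sublinear as a function from $X$ to $\mathcal G(Z,0^+f(x))$; that is, $f'(x,su)=sf'(x,u)$ for all $s>0$, $u\in X$, and $f'(x,su_1+(1-s)u_2)\supseteq sf'(x,u_1)\oplus(1-s)f'(x,u_2)$ for all $u_1,u_2\in X$, $s\in(0,1)$.
   Context: $X$ is a real linear space, $Z$ a real locally convex Hausdorff space, $C\subseteq Z$ a closed convex cone with $0\in C$ and $C^-=\{z^*\in Z^*:z^*(c)\le0\ \forall c\in C\}\ne\{0\}$. For a closed convex cone $K$ with $0\in K$, $\mathcal G(Z,K)=\{A\subseteq Z: A=\operatorname{cl}\operatorname{co}(A+K)\}$; $\mathcal G=\mathcal G(Z,C)$. $A\oplus B=\operatorname{cl}\{a+b\}$, $tA=\{ta\}$ for $t>0$, $A\ominus B=\{z: B+\{z\}\subseteq A\}$. $0^+A=\{z: A+\{z\}\subseteq A\}$ for $A\neq\emptyset$. $f$ convex: $f(tx_1+(1-t)x_2)\supseteq tf(x_1)\oplus(1-t)f(x_2)$; $\operatorname{dom}f=\{x: f(x)\ne\emptyset\}$. $f'(x,u)=\bigcap_{t_0>0}\operatorname{cl}\operatorname{co}\bigcup_{0<t<t_0}\frac1t\big(f(x+tu)\ominus f(x)\big)$. *)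

(* Defs.v *)
From HB Require Import structures.
From mathcomp Require Import all_boot all_order all_algebra.
From mathcomp Require Import all_classical all_reals all_analysis.
Set Implicit Arguments.
Unset Strict Implicit.
Unset Printing Implicit Defensive.
Import Order.TTheory GRing.Theory Num.Theory.
Local Open Scope classical_set_scope.
Local Open Scope ring_scope.

Section SetValued.
Context {R : realType}.

Definition convexS {V : lmodType R} (A : set V) : Prop :=
  forall a b t, A a -> A b -> 0 <= t -> t <= 1 -> A (t *: a + (1 - t) *: b).

Definition co {V : lmodType R} (A : set V) : set V :=
  \bigcap_(B in [set B : set V | convexS B /\ A `<=` B]) B.

Definition closed_convex_cone {Z : tvsType R} (K : set Z) : Prop :=
  closed K /\ convexS K /\ K 0 /\ (forall t c, 0 < t -> K c -> K (t *: c)).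

(* C^- <> {0}: some nonzero continuous linear functional is <= 0 on C *)
Definition negdual_nontrivial {Z : tvsType R} (C : set Z) : Prop :=
  exists zs : Z -> R,
    (forall a b, zs (a + b) = zs a + zs b) /\
    (forall (t : R) a, zs (t *: a) = t * zs a) /\
    (forall (z : Z) (e : R), 0 < e -> \forall y \near z, `|zs y - zs z| < e) /\
    (forall c, C c -> zs c <= 0) /\
    (exists z, zs z != 0).

Definition msum {V : lmodType R} (A B : set V) : set V :=
  [set z | exists a b, A a /\ B b /\ z = a + b].

Definition oplus {Z : tvsType R} (A B : set Z) : set Z := closure (msum A B).

Definition sscale {V : lmodType R} (t : R) (A : set V) : set V :=
  [set t *: a | a in A].

Definition ominus {V : lmodType R} (A B : set V) : set V :=
  [set z | forall b, B b -> A (b + z)].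

Definition recc {V : lmodType R} (A : set V) : set V :=
  [set z | forall a, A a -> A (a + z)].

Definition inG {Z : tvsType R} (K : set Z) (A : set Z) : Prop :=
  A = closure (co (msum A K)).

Definition convex_setfun {X : lmodType R} {Z : tvsType R} (f : X -> set Z) : Prop :=
  forall x1 x2 (t : R), 0 < t -> t < 1 ->
    oplus (sscale t (f x1)) (sscale (1 - t) (f x2)) `<=` f (t *: x1 + (1 - t) *: x2).

Definition dom {X : lmodType R} {Z : tvsType R} (f : X -> set Z) : set X :=
  [set x | f x != set0].

Definition dirder {X : lmodType R} {Z : tvsType R} (f : X -> set Z) (x u : X) : set Z :=
  \bigcap_(t0 in [set t0 : R | 0 < t0])
    closure (co (\bigcup_(t in [set t : R | 0 < t < t0])
                   sscale t^-1 (ominus (f (x + t *: u)) (f x)))).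

End SetValued.

(* Main.v *)
Require Import Defs.
From HB Require Import structures.
From mathcomp Require Import all_boot all_order all_algebra.
From mathcomp Require Import all_classical all_reals all_analysis.
Import Order.TTheory GRing.Theory Num.Theory.
Local Open Scope classical_set_scope.
Local Open Scope ring_scope.

Section S.
Context {R : realType} {Z : tvsType R}.

Lemma scal_cont (a : R) : continuous (fun z : Z => a *: z).
Proof.
move=> z.
apply: (@continuous_comp Z (R^o * Z)%type Z (fun z => (a, z)) (fun x => x.1 *: x.2)); last exact: scale_continuous.
exact: (cvg_pair (cvg_cst (a : R^o)) cvg_id).
Qed.

Lemma lin2_cont (a b : R) (p q : Z) :
  {for (p, q), continuous (fun z : Z * Z => a *: z.1 + b *: z.2)}.
Proof.
apply: (@continuous_comp (Z * Z)%type (Z * Z)%type Z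
   (fun z => (a *: z.1, b *: z.2)) (fun x => x.1 + x.2)); last exact: add_continuous.
have hf : {for (p, q), continuous (@fst Z Z)} by exact: cvg_fst.
have hs : {for (p, q), continuous (@snd Z Z)} by exact: cvg_snd.
have h1 := @continuous_comp (Z * Z)%type Z Z fst (fun z => a *: z) (p, q) hf (@scal_cont a p).
have h2 := @continuous_comp (Z * Z)%type Z Z snd (fun z => b *: z) (p, q) hs (@scal_cont b q).
have h3 := cvg_pair h1 h2. exact: h3.
Qed.

Lemma clo2 (a b : R) (A B S : set Z) p q :
  closure A p -> closure B q ->
  (forall x y, A x -> B y -> S (a *: x + b *: y)) -> closure S (a *: p + b *: q).
Proof.
move=> hp hq hS N hN.
have := @lin2_cont a b p q N hN.
move=> [[U V] /= [hU hV] sub].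
have [x [Ax Ux]] := hp _ hU.
have [y [By Vy]] := hq _ hV.
exists (a *: x + b *: y); split; first exact: hS.
exact: (sub (x, y)).
Qed.

Lemma sub_co (A : set Z) : A `<=` co A.
Proof. by move=> a Aa B [_ AB]; exact: AB. Qed.

Lemma co_convex (A : set Z) : convexS (co A).
Proof. move=> a b t ha hb t0 t1 B [cB AB]; apply: (cB) => //; [exact: (ha B (conj cB AB))|exact: (hb B (conj cB AB))]. Qed.

Lemma co_min (A B : set Z) : convexS B -> A `<=` B -> co A `<=` B.
Proof. by move=> cB AB y; apply. Qed.

Lemma co_key (T : set Z) (c : R) (w : Z) : convexS (fun x => co T (c *: x + w)).
Proof.
move=> x1 x2 t h1 h2 t0 t1.
have -> : c *: (t *: x1 + (1 - t) *: x2) + w =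
    t *: (c *: x1 + w) + (1 - t) *: (c *: x2 + w).
  rewrite !scalerDr !scalerA addrACA -scalerDl.
  by rewrite (addrC t) subrK scale1r (mulrC t c) (mulrC (1-t) c).
exact: (@co_convex T _ _ t h1 h2 t0 t1).
Qed.

Lemma co2 (a b : R) (A B S : set Z) :
  (forall x y, A x -> B y -> S (a *: x + b *: y)) ->
  forall x y, co A x -> co B y -> co S (a *: x + b *: y).
Proof.
move=> h.
have st1 : forall y, B y -> forall x, co A x -> co S (a *: x + b *: y).
  move=> y By; apply: co_min; first exact: co_key.
  by move=> x Ax; apply: sub_co; exact: h.
move=> x y cx cy.
rewrite addrC.
move: y cy; apply: co_min; first exact: co_key.
by move=> y By /=; rewrite addrC; exact: st1.
Qed.

Lemma cc2 (a b : R) (A B S : set Z) p q :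
  (forall x y, A x -> B y -> S (a *: x + b *: y)) ->
  closure (co A) p -> closure (co B) q -> closure (co S) (a *: p + b *: q).
Proof. by move=> h hp hq; apply: (@clo2 a b (co A) (co B) (co S) p q hp hq); exact: co2. Qed.


Lemma closure_convex (A : set Z) : convexS A -> convexS (closure A).
Proof.
move=> cA p q t hp hq t0 t1.
apply: (@clo2 t (1 - t) A A A p q hp hq) => x y Ax Ay.
exact: cA.
Qed.

Lemma cc_closed (A : set Z) : closed (closure (co A)).
Proof. exact: closed_closure. Qed.

Lemma cc_convex (A : set Z) : convexS (closure (co A)).
Proof. apply: closure_convex; exact: co_convex. Qed.

Lemma cc_sub (A : set Z) : A `<=` closure (co A).
Proof. by move=> a Aa; apply: subset_closure; exact: sub_co. Qed.

Lemma cc_min (A B : set Z) : closed B -> convexS B -> A `<=` B -> closure (co A) `<=` B.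
Proof.
move=> clB cB AB y hy; apply: clB; apply: (closureS _ hy); exact: co_min.
Qed.

End S.

Lemma comb1 {R : realType} {V : lmodType R} (l : R) (v : V) : l *: v + (1 - l) *: v = v.
Proof. by rewrite -scalerDl (addrC l) subrK scale1r. Qed.

Definition Qs {R : realType} {X : lmodType R} {Z : tvsType R} (f : X -> set Z) (x u : X) (t : R) : set Z :=
  sscale t^-1 (ominus (f (x + t *: u)) (f x)).

Lemma Qmono {R : realType} {X : lmodType R} {Z : tvsType R} (f : X -> set Z)
  (hfc : convex_setfun f) (x u : X) (s t : R) :
  0 < s -> s <= t -> Qs f x u t `<=` Qs f x u s.
Proof.
move=> s0 st w [z hz <-].
case: (eqVneq s t) => [->|neq]; first by exists z.
have st' : s < t by rewrite lt_neqAle neq st.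
have t0 : 0 < t by exact: lt_trans st'.
set l := s / t.
have l0 : 0 < l by rewrite divr_gt0.
have l1 : l < 1 by rewrite ltr_pdivrMr // mul1r.
exists (l *: z); last first.
  by rewrite scalerA /l mulrA mulVf ?mul1r // gt_eqF.
move=> b fb.
have eqx : l *: (x + t *: u) + (1 - l) *: x = x + s *: u.
  rewrite scalerDr scalerA /l divfK ?gt_eqF // addrAC comb1 //.
have := hfc (x + t *: u) x l l0 l1; rewrite eqx; apply.
apply: subset_closure.
exists (l *: (b + z)), ((1 - l) *: b); split; first by exists (b + z) => //; exact: hz.
split; first by exists b.
by rewrite scalerDr addrAC comb1.
Qed.

Lemma part1 {R : realType} {X : lmodType R} {Z : tvsType R} (f : X -> set Z)
  (hfc : convex_setfun f) (x u : X) :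
  dirder f x u = closure (co (\bigcup_(t in [set t : R | 0 < t]) Qs f x u t)).
Proof.
have U : forall t0 : R, 0 < t0 ->
   \bigcup_(t in [set t : R | 0 < t < t0]) Qs f x u t =
   \bigcup_(t in [set t : R | 0 < t]) Qs f x u t.
  move=> t0 t0p; apply/seteqP; split.
    by move=> w [t /andP[tp _] hw]; exists t.
  move=> w [t /= tp hw]; case: (ltP t t0) => h.
    by exists t => //=; rewrite tp h.
  have h2 : 0 < t0 / 2 by rewrite divr_gt0.
  exists (t0 / 2).
    by rewrite /= h2 ltr_pdivrMr // ltr_pMr // ltr1n.
  apply: (@Qmono _ _ _ f hfc x u (t0/2) t h2 _ w hw).
  by apply: le_trans h; rewrite ler_pdivrMr // ler_pMr // ler1n.
rewrite /Qs in U.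
apply/seteqP; split.
  move=> w hw; have := hw 1 ltr01; rewrite /= U //.
move=> w hw t0 t0p; rewrite /= U //.
Qed.

Section Recc.
Context {R : realType} {Z : tvsType R}.

Lemma recc_closed (A : set Z) : closed A -> closed (recc A).
Proof.
move=> clA z hz a Aa; apply: clA.
have := @clo2 R Z 1 1 [set a] (recc A) A a z (subset_closure (erefl a)) hz.
rewrite !scale1r; apply => x y -> ry; rewrite !scale1r; exact: ry.
Qed.

Lemma recc_convex (A : set Z) : convexS A -> convexS (recc A).
Proof.
move=> cA z1 z2 t h1 h2 t0 t1 a Aa.
rewrite -{1}(comb1 t a) addrACA -!scalerDr.
by apply: cA => //; [exact: h1|exact: h2].
Qed.

Lemma recc_nat (A : set Z) z n : recc A z -> recc A (n%:R *: z).
Proof.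
move=> hz; elim: n => [|n IH] a Aa; first by rewrite scale0r addr0.
by rewrite -addn1 natrD scalerDl scale1r addrA; apply: hz; exact: IH.
Qed.

Lemma recc_cone (A : set Z) z (t : R) : convexS A -> recc A z -> 0 < t -> recc A (t *: z).
Proof.
move=> cA hz tp.
have hb := archi_boundP (ltW tp).
set n := Num.bound t in hb.
have np : 0 < (n%:R : R) by exact: lt_trans hb.
set l := t / n%:R.
have l0 : 0 <= l by rewrite divr_ge0 // ltW.
have l1 : l <= 1 by rewrite ler_pdivrMr // mul1r ltW.
have h0 : recc A 0 by move=> a Aa; rewrite addr0.
have := @recc_convex A cA _ _ l (@recc_nat A z n hz) h0 l0 l1.
by rewrite scaler0 addr0 scalerA /l divfK // gt_eqF.
Qed.

End Recc.

Lemma sc1 {R : realType} {Z : tvsType R} (a : R) (A S : set Z) p :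
  (forall y, A y -> S (a *: y)) -> closure (co A) p -> closure (co S) (a *: p).
Proof.
move=> h hp.
have := @cc2 R Z a 0 A setT S p 0 _ hp (@cc_sub R Z setT 0 I).
  by rewrite scale0r addr0; apply => x y Ax _; rewrite scale0r addr0; exact: h.
Qed.

Theorem mainTheorem8 (R : realType) (X : lmodType R) (Z : tvsType R)
  (hZ : hausdorff_space Z) (C : set Z)
  (hC : closed_convex_cone C) (hCd : negdual_nontrivial C)
  (f : X -> set Z) (hfG : forall x, inG C (f x)) (hfc : convex_setfun f)
  (x : X) (hx : dom f x) (u : X) :
  dirder f x u =
    closure (co (\bigcup_(t in [set t : R | 0 < t])
                   sscale t^-1 (ominus (f (x + t *: u)) (f x)))) /\
  dirder f x 0 = recc (f x) /\
  (forall v, inG (recc (f x)) (dirder f x v)) /\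
  (forall (s : R) v, 0 < s -> dirder f x (s *: v) = sscale s (dirder f x v)) /\
  (forall (s : R) u1 u2, 0 < s -> s < 1 ->
     oplus (sscale s (dirder f x u1)) (sscale (1 - s) (dirder f x u2))
       `<=` dirder f x (s *: u1 + (1 - s) *: u2)).
Proof.
have fcl : closed (f x) by rewrite (hfG x); exact: closed_closure.
have fcv : convexS (f x) by rewrite (hfG x); exact: cc_convex.
have rcone : forall z t, recc (f x) z -> 0 < t -> recc (f x) (t *: z).
  by move=> z t hz tp; exact: recc_cone.
have h0 : recc (f x) 0 by move=> a Aa; rewrite addr0.
split; first exact: part1.
split.
  rewrite (part1 _ hfc); apply/seteqP; split.
    apply: cc_min; [exact: recc_closed|exact: recc_convex|].
    move=> w [t /= tp [z hz <-]].
    rewrite scaler0 addr0 in hz.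
    by apply: rcone => //; rewrite invr_gt0.
  move=> w hw; apply: cc_sub; exists 1; first exact: ltr01.
  by exists w; rewrite ?scaler0 ?addr0 // invr1 scale1r.
split.
  move=> v; rewrite /inG (part1 _ hfc); apply/seteqP; split.
    move=> d hd; apply: subset_closure; apply: sub_co.
    by exists d, 0; split => //; split => //; rewrite addr0.
  apply: cc_min; [exact: closed_closure|exact: cc_convex|].
  move=> w [d [r [hd [hr ->]]]].
  have := @cc2 R Z 1 1 _ [set r] _ d r _ hd (@cc_sub R Z [set r] r (erefl r)).
  rewrite !scale1r; apply => y r' [t tp [z hz <-]] ->; rewrite !scale1r.
  exists t => //; exists (z + t *: r).
    move=> b fb; rewrite (addrC z) addrA; apply: hz.
    exact: (rcone r t hr tp b fb).
  by rewrite scalerDr scalerA mulVf ?scale1r // gt_eqF.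
split.
  move=> s v sp; rewrite !(part1 _ hfc).
  have Ueq : \bigcup_(t in [set t : R | 0 < t]) Qs f x (s *: v) t =
             sscale s (\bigcup_(t in [set t : R | 0 < t]) Qs f x v t).
    apply/seteqP; split.
      move=> w [t /= tp [z hz <-]].
      exists ((t * s)^-1 *: z).
        exists (t * s); first by rewrite /= mulr_gt0.
        by exists z => //; rewrite -scalerA.
      by rewrite scalerA invfM mulrCA mulfV ?mulr1 // gt_eqF.
    move=> w [y [t /= tp [z hz <-]] <-].
    exists (t / s); first by rewrite /= divr_gt0.
    exists z; first by rewrite scalerA divfK // gt_eqF.
    by rewrite scalerA invf_div.
  rewrite Ueq; apply/seteqP; split.
    move=> w hw; exists (s^-1 *: w); last by rewrite scalerA divff ?scale1r // gt_eqF.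
    apply: (@sc1 R Z s^-1 _ _ w _ hw) => y [y' hy' <-].
    by rewrite scalerA mulVf ?scale1r // gt_eqF.
  move=> w [y hy <-]; apply: (@sc1 R Z s _ _ y _ hy) => y' hy'; by exists y'.
move=> s u1 u2 s0 s1; rewrite !(part1 _ hfc).
move=> w hw; apply: closed_closure; apply: (closureS _ hw).
move=> w' [a [b [[d1 hd1 <-] [[d2 hd2 <-] ->]]]].
apply: (@cc2 R Z s (1 - s) _ _ _ _ _ _ hd1 hd2) => y1 y2 [t1 t1p [z1 hz1 <-]] [t2 t2p [z2 hz2 <-]].
have [t [tp [ht1 ht2]]] : exists t : R, 0 < t /\ t <= t1 /\ t <= t2.
  by case: (leP t1 t2) => h; [exists t1 | exists t2]; do !split => //; rewrite ?lexx ?ltW.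
have := @Qmono R X Z f hfc x u1 t t1 tp ht1 (t1^-1 *: z1).
case; first by exists z1.
move=> z1' hz1' <-.
have := @Qmono R X Z f hfc x u2 t t2 tp ht2 (t2^-1 *: z2).
case; first by exists z2.
move=> z2' hz2' <-.
exists t => //; exists (s *: z1' + (1 - s) *: z2'); last first.
  by rewrite scalerDr !scalerA (mulrC s) (mulrC (1 - s)).
move=> c fb.
have eqx : s *: (x + t *: u1) + (1 - s) *: (x + t *: u2) =
           x + t *: (s *: u1 + (1 - s) *: u2).
  by rewrite !scalerDr addrACA comb1 !scalerA (mulrC s t) (mulrC (1 - s) t).
rewrite -eqx; apply: (hfc _ _ s s0 s1); apply: subset_closure.
exists (s *: (c + z1')), ((1 - s) *: (c + z2')).
split; first by exists (c + z1') => //; exact: hz1'.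
split; first by exists (c + z2') => //; exact: hz2'.
by rewrite !scalerDr addrACA comb1.
Qed.
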